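(* Let $\tau:\mathcal A\to\mathcal A^+$ be a substitution satisfying the standing assumptions below, with a generating fixed point $u=u_0u_1u_2\ldots$. For a letter $a\in\mathcal A$, the sequence $au=au_0u_1u_2\ldots$ belongs to $X_\tau$ if and only if $a$ is part of a suffix cycle $a_1,a_2,\ldots,a_m$ such that $a_iu_0\in\mathcal L_\tau$ for some $i\in\{1,\ldots,m\}$.
   Context: $\mathcal A$ is a finite alphabet, $\mathcal A^+$ the finite words over it. A substitution $\tau$ is extended to words and one-sided sequences by concatenation. The language $\mathcal L_\tau$ is the set of all finite subwords of the words $\tau^n(a)$, $n\ge1$, $a\in\mathcal A$. A fixed point is $u\in\mathcal A^{\mathbb N}$ with $\tau(u)=u$; it is generating if its set of finite subwords is $\mathcal L_\tau$. $\sigma$ is the left shift and $X_\tau$ is the closure of $\{\sigma^n(u):n\ge0\}$ in $\mathcal A^{\mathbb N}$. Letters $a_1,\ldots,a_m$ form a suffix cycle if the last letter of $\tau(a_i)$ is $a_{i+1}$ for $1\le i<m$ and the last letter of $\tau(a_m)$ is $a_1$; $a$ is part of it if $a\in\{a_1,\ldots,a_m\}$. Standing assumptions: $\tau$ is primitive, $X_\tau$ is aperiodic (infinite), $\tau$ is unilaterally recognizable (with $E=\{0\}\cup\{|\tau(u_0\cdots u_{p-1})|:p>0\}$ there is $L$ such that $u_{[i,i+L-1]}=u_{[j,j+L-1]}$ and $i\in E$ imply $j\in E$), and every power $\tau^n$ is injective on letters. *)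

(* Defs.v *)
From mathcomp Require Import ssreflect ssrfun ssrbool eqtype ssrnat seq path choice fintype.
Set Implicit Arguments. Unset Strict Implicit. Unset Printing Implicit Defensive.

Section Subst.
Variable A : finType.
Variable tau : A -> seq A.

Definition subw (w : seq A) : seq A := flatten (map tau w).

Definition subst_pow (n : nat) (a : A) : seq A := iter n subw [:: a].

Definition nonerasing : Prop := forall a, 0 < size (tau a).

Definition prefix (u : nat -> A) (n : nat) : seq A := mkseq u n.

Definition factor (u : nat -> A) (i n : nat) : seq A := mkseq (fun k => u (i + k)) n.

(* tau extended to one-sided sequences by concatenation:
   letter i of tau(u0 u1 ...) is letter i of tau(u_0 ... u_i)
   (which has length >= i+1 when tau is nonerasing) *)
Definition subst_inf (u : nat -> A) : nat -> A :=
  fun i => nth (u 0) (subw (prefix u i.+1)) i.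

Definition inL (w : seq A) : Prop :=
  exists n, exists a, 0 < n /\ infix w (subst_pow n a).

Definition fixed_point (u : nat -> A) : Prop := forall i, subst_inf u i = u i.

Definition generating (u : nat -> A) : Prop :=
  fixed_point u /\ forall w, (exists i, w = factor u i (size w)) <-> inL w.

(* x belongs to X_tau = closure of {sigma^n u : n >= 0} in A^N (product of
   discrete topologies): every cylinder neighbourhood of x (fixing the first
   N coordinates) meets the orbit. *)
Definition inX (u x : nat -> A) : Prop :=
  forall N, exists n, forall i, i < N -> u (n + i) = x i.

Definition X_infinite (u : nat -> A) : Prop :=
  ~ exists s : seq (nat -> A),
      forall x, inX u x -> exists2 j, j < size s & forall i, x i = nth x s j i.

Definition primitive : Prop :=
  exists n, 0 < n /\ forall a b, b \in subst_pow n a.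

Definition inE (u : nat -> A) (k : nat) : Prop :=
  exists p, k = size (subw (prefix u p)).

Definition unil_recognizable (u : nat -> A) : Prop :=
  exists L, forall i j, factor u i L = factor u j L -> inE u i -> inE u j.

Definition powers_injective : Prop :=
  forall n, 0 < n -> injective (subst_pow n).

Definition last_letter (a : A) : A := last a (tau a).

Definition suffix_cycle (s : seq A) : Prop :=
  s != [::] /\ cycle (fun x y => last_letter x == y) s.

End Subst.

Definition cons_seq (A : Type) (a : A) (u : nat -> A) : nat -> A :=
  fun n => if n is k.+1 then u k else a.

(* Main.v *)
Require Import Defs.
From mathcomp Require Import ssreflect ssrfun ssrbool eqtype ssrnat seq path choice fintype.
Require Import Defs.
Set Implicit Arguments. Unset Strict Implicit. Unset Printing Implicit Defensive.

Definition epos (A : finType) (tau : A -> seq A) (u : nat -> A) p :=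
  size (subw tau (prefix u p)).

Lemma subw_cat (A : finType) (tau : A -> seq A) w1 w2 :
  subw tau (w1 ++ w2) = subw tau w1 ++ subw tau w2.
Proof. by rewrite /subw map_cat flatten_cat. Qed.

Lemma subw_cons (A : finType) (tau : A -> seq A) x w :
  subw tau (x :: w) = tau x ++ subw tau w.
Proof. by []. Qed.

Lemma prefix_add (A : finType) (u : nat -> A) i n :
  prefix u (i + n) = prefix u i ++ factor u i n.
Proof.
apply: (@eq_from_nth _ (u 0)); first by rewrite size_cat !size_mkseq.
move=> k; rewrite size_mkseq => hk.
rewrite nth_mkseq // nth_cat size_mkseq.
case: ltnP => h; first by rewrite nth_mkseq.
by rewrite nth_mkseq ?subnKC // ltn_subLR.
Qed.

Lemma size_subw_ge (A : finType) (tau : A -> seq A) w :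
  nonerasing tau -> size w <= size (subw tau w).
Proof.
move=> ne; elim: w => //= x w IH.
rewrite subw_cons size_cat -addn1 addnC leq_add //.
Qed.

Lemma e_succ (A : finType) (tau : A -> seq A) (u : nat -> A) p :
  subw tau (prefix u p.+1) = subw tau (prefix u p) ++ tau (u p).
Proof.
by rewrite -addn1 prefix_add subw_cat /factor /mkseq /= addn0 /subw /= cats0.
Qed.

Lemma epos_succ (A : finType) (tau : A -> seq A) (u : nat -> A) p :
  epos tau u p.+1 = epos tau u p + size (tau (u p)).
Proof. by rewrite /epos e_succ size_cat. Qed.

Lemma epos_lt (A : finType) (tau : A -> seq A) (u : nat -> A) q r :
  nonerasing tau -> q < r -> epos tau u q < epos tau u r.
Proof.
move=> ne; elim: r => // r IH; rewrite ltnS leq_eqVlt => /orP [/eqP ->|h].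
  by rewrite epos_succ -{1}(addn0 (epos _ _ _)) ltn_add2l.
apply: (ltn_trans (IH h)); rewrite epos_succ -{1}(addn0 (epos _ _ _)) ltn_add2l.
exact: ne.
Qed.

Lemma epos_le (A : finType) (tau : A -> seq A) (u : nat -> A) q r :
  nonerasing tau -> q <= r -> epos tau u q <= epos tau u r.
Proof.
move=> ne; rewrite leq_eqVlt => /orP [/eqP ->//|h]; exact/ltnW/epos_lt.
Qed.

Lemma epos_ltI (A : finType) (tau : A -> seq A) (u : nat -> A) q r :
  nonerasing tau -> epos tau u q < epos tau u r -> q < r.
Proof.
move=> ne h; rewrite ltnNge; apply/negP => hle.
by move: (epos_le u ne hle); rewrite leqNgt h.
Qed.

Lemma epos_ge (A : finType) (tau : A -> seq A) (u : nat -> A) p :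
  nonerasing tau -> p <= epos tau u p.
Proof. move=> ne; rewrite /epos -{1}(size_mkseq u p); exact: size_subw_ge. Qed.

Lemma nth_subw_prefix (A : finType) (tau : A -> seq A) (u : nat -> A) x0 q r k :
  k < epos tau u q -> k < epos tau u r ->
  nth x0 (subw tau (prefix u q)) k = nth x0 (subw tau (prefix u r)) k.
Proof.
wlog: q r / q <= r => [H|hqr].
  case: (leqP q r) => h hq hr; first exact: H.
  by symmetry; apply: H => //; exact: ltnW.
move=> hq _; rewrite -(subnKC hqr) prefix_add subw_cat nth_cat.
by rewrite -/(epos tau u q) hq.
Qed.

Lemma prefix_fix (A : finType) (tau : A -> seq A) (u : nat -> A) p :
  nonerasing tau -> fixed_point tau u ->
  subw tau (prefix u p) = prefix u (epos tau u p).
Proof.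
move=> ne fx; apply: (@eq_from_nth _ (u 0)); first by rewrite size_mkseq.
move=> k; rewrite -/(epos tau u p) => hk.
rewrite nth_mkseq // -[RHS]fx /subst_inf; apply: nth_subw_prefix => //.
apply: leq_trans (epos_ge u (k.+1) ne); done.
Qed.

Lemma block (A : finType) (tau : A -> seq A) (u : nat -> A) q k :
  nonerasing tau -> fixed_point tau u -> k < size (tau (u q)) ->
  nth (u 0) (tau (u q)) k = u (epos tau u q + k).
Proof.
move=> ne fx hk.
have := prefix_fix q.+1 ne fx; rewrite e_succ => h.
have := congr1 (fun s => nth (u 0) s (epos tau u q + k)) h.
rewrite nth_cat -/(epos tau u q) ltnNge leq_addr /= addKn => ->.
rewrite nth_mkseq // epos_succ ltn_add2l //.
Qed.

Lemma factor_subw (A : finType) (tau : A -> seq A) (u : nat -> A) i n :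
  nonerasing tau -> fixed_point tau u ->
  subw tau (factor u i n) = factor u (epos tau u i) (size (subw tau (factor u i n))).
Proof.
move=> ne fx; apply: (@eq_from_nth _ (u 0)); first by rewrite size_mkseq.
move=> k hk; rewrite nth_mkseq //.
have := prefix_fix (i + n) ne fx; rewrite prefix_add subw_cat => h.
have := congr1 (fun s => nth (u 0) s (epos tau u i + k)) h.
rewrite nth_cat -/(epos tau u i) ltnNge leq_addr /= addKn => ->.
rewrite nth_mkseq // /epos prefix_add subw_cat size_cat ltn_add2l //.
Qed.

Definition occ (A : finType) (u : nat -> A) (w : seq A) :=
  exists i, w = factor u i (size w).

Lemma occ_subw (A : finType) (tau : A -> seq A) (u : nat -> A) w :
  nonerasing tau -> fixed_point tau u -> occ u w -> occ u (subw tau w).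
Proof.
move=> ne fx [i hi]; exists (epos tau u i); rewrite hi; exact: factor_subw.
Qed.

Lemma occ_iter (A : finType) (tau : A -> seq A) (u : nat -> A) w k :
  nonerasing tau -> fixed_point tau u -> occ u w -> occ u (iter k (subw tau) w).
Proof. move=> ne fx h; elim: k => //= k IH; exact: occ_subw. Qed.

Lemma iter_cat (A : finType) (tau : A -> seq A) k w1 w2 :
  iter k (subw tau) (w1 ++ w2) = iter k (subw tau) w1 ++ iter k (subw tau) w2.
Proof. elim: k => //= k ->; exact: subw_cat. Qed.

Lemma prefix1 (A : finType) (u : nat -> A) : prefix u 1 = [:: u 0].
Proof. by []. Qed.

Lemma tau_u0_big (A : finType) (tau : A -> seq A) (u : nat -> A) :
  nonerasing tau -> primitive tau -> X_infinite u -> fixed_point tau u ->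
  1 < size (tau (u 0)).
Proof.
move=> ne [n [n0 pr]] Xi fx; rewrite ltnNge; apply/negP => h1.
have hs : size (tau (u 0)) = 1 by apply/eqP; rewrite eqn_leq h1 ne.
have ht : tau (u 0) = [:: u 0].
  move: hs (fx 0); rewrite /subst_inf prefix1 /subw /= cats0.
  by case: (tau (u 0)) => [|x [|y t]] //= _ ->.
have hp : forall k, subst_pow tau k (u 0) = [:: u 0].
  by elim=> //= k; rewrite /subst_pow => ->; rewrite /subw /= cats0.
have allu : forall b, b = u 0.
  by move=> b; have := pr (u 0) b; rewrite hp mem_seq1 => /eqP.
apply: Xi; exists [:: u]; move=> x _; exists 0 => // i /=.
by rewrite (allu (x i)) (allu (u i)).
Qed.

Lemma epos_big (A : finType) (tau : A -> seq A) (u : nat -> A) m :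
  nonerasing tau -> 1 < size (tau (u 0)) -> 0 < m -> m < epos tau u m.
Proof.
move=> ne hb; elim: m => // m IH _.
case: m IH => [|m] IH; first by rewrite epos_succ.
rewrite epos_succ; apply: (@leq_ltn_trans (epos tau u m.+1)); first exact: IH.
by rewrite -{1}(addn0 (epos _ _ _)) ltn_add2l; exact: ne.
Qed.

Lemma iter_prefix (A : finType) (tau : A -> seq A) (u : nat -> A) k :
  nonerasing tau -> 1 < size (tau (u 0)) -> fixed_point tau u ->
  exists m, iter k (subw tau) [:: u 0] = prefix u m /\ k < m.
Proof.
move=> ne hb fx; elim: k => [|k [m [hm hk]]]; first by exists 1.
exists (epos tau u m); split; first by rewrite /= hm prefix_fix.
apply: leq_trans (epos_big ne hb _); first by []. exact: leq_ltn_trans hk.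
Qed.

Lemma iter_last (A : finType) (tau : A -> seq A) k b :
  nonerasing tau ->
  exists s, iter k (subw tau) [:: b] = rcons s (iter k (last_letter tau) b).
Proof.
move=> ne; elim: k => [|k [s hs]]; first by exists [::].
rewrite /= hs -cats1 subw_cat {2}/subw /= cats0.
have := ne (iter k (last_letter tau) b).
case E: (tau _) => [|y t] // _.
exists (subw tau s ++ belast y t).
by rewrite lastI rcons_cat /last_letter E.
Qed.

Lemma cycle_reach (A : finType) (tau : A -> seq A) s a b :
  suffix_cycle tau s -> a \in s -> b \in s ->
  exists k d, [/\ 0 < d, iter k (last_letter tau) b = a &
                   iter d (last_letter tau) b = b].
Proof.
set f := last_letter tau.
case: s => [|x0 p] [_ hc] // ha hb.
have hp : fpath f x0 (rcons p x0) by exact: hc.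
case/fpathP: hp => n hn.
have hsz : n = (size p).+1 by rewrite -(size_traject f (f x0) n) -hn size_rcons.
move: hn; rewrite hsz trajectSr => /rcons_inj [hp' hx].
have hd : iter (size p).+1 f x0 = x0 by rewrite iterSr -hx.
have hs : x0 :: p = traject f x0 (size p).+1 by rewrite /= -hp'.
move: ha hb; rewrite hs => /trajectP [j hj ->] /trajectP [i hi ->].
set d := (size p).+1.
exists (d - i + j), d; split => //.
  rewrite -iterD addnAC subnK; last exact: ltnW.
  by rewrite addnC iterD hd.
by rewrite -iterD addnC iterD hd.
Qed.

Lemma iter_period (T : Type) (f : T -> T) d b K k :
  iter d f b = b -> iter (K * d + k) f b = iter k f b.
Proof.
move=> hd; elim: K => [|K IH]; first by rewrite mul0n add0n.
by rewrite mulSn -addnA addnC iterD hd IH.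
Qed.

Lemma backward (A : finType) (tau : A -> seq A) (u : nat -> A) s a b :
  nonerasing tau -> 1 < size (tau (u 0)) -> fixed_point tau u ->
  suffix_cycle tau s -> a \in s -> b \in s -> occ u [:: b; u 0] ->
  inX u (cons_seq a u).
Proof.
move=> ne hb fx hs ha hbs ho N.
have [k0 [d [d0 hk hd]]] := cycle_reach hs ha hbs.
set K := N * d + k0.
have hK : iter K (last_letter tau) b = a by rewrite /K iter_period.
have hNK : N <= K by rewrite /K; apply: leq_trans (leq_pmulr N d0) (leq_addr _ _).
have [s0 hs0] := iter_last K b ne.
have [m [hm hKm]] := iter_prefix K ne hb fx.
have := occ_iter K ne fx ho.
rewrite -cat1s iter_cat hs0 hm hK => [[i hi]].
exists (i + size s0) => t ht.
have := congr1 (fun w => nth (u 0) w (size s0 + t)) hi.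
rewrite nth_mkseq; last first.
  rewrite size_cat size_rcons size_mkseq -addSn leq_add2l.
  exact: leq_trans (ltnW ht) (leq_trans hNK (ltnW hKm)).
rewrite addnA => <-; rewrite nth_cat size_rcons.
case: t ht => [|t] ht.
  by rewrite addn0 ltnSn nth_rcons ltnn eqxx.
rewrite addnS ltnS ltnNge leq_addr /= subSS addKn.
rewrite nth_mkseq //.
exact: leq_trans (ltnW ht) (leq_trans hNK (ltnW hKm)).
Qed.

Definition condX (A : finType) (u : nat -> A) c M :=
  exists n, forall i, i < M -> u (n + i) = cons_seq c u i.

Lemma tau_inj (A : finType) (tau : A -> seq A) :
  powers_injective tau -> injective tau.
Proof.
move=> pi x y h; apply: (pi 1 isT); by rewrite /subst_pow /= /subw /= h.
Qed.

Lemma inE0 (A : finType) (tau : A -> seq A) (u : nat -> A) : inE tau u 0.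
Proof. by exists 0. Qed.

Lemma step_M (A : finType) (tau : A -> seq A) (u : nat -> A) a :
  nonerasing tau -> fixed_point tau u -> unil_recognizable tau u ->
  powers_injective tau -> inX u (cons_seq a u) ->
  forall M, exists c, last_letter tau c = a /\ condX u c M.
Proof.
move=> ne fx [L hL] pi hX M.
set N' := epos tau u M + L.
have [n hn] := hX N'.+1.
set j := n.+1.
have hj : forall k, k < N' -> u (j + k) = u k.
  by move=> k hk; rewrite /j addSn -addnS hn.
have shift : forall x, x + L <= N' -> factor u (j + x) L = factor u x L.
  move=> x hx; apply: (@eq_from_nth _ (u 0)); first by rewrite !size_mkseq.
  move=> k; rewrite size_mkseq => hk; rewrite !nth_mkseq // -addnA hj //.
  by apply: leq_trans hx; rewrite ltn_add2l.
have [p hp] : inE tau u j.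
  apply: (hL 0 j) (inE0 tau u); symmetry; rewrite -[X in factor u X L]addn0; apply: (shift 0); by rewrite add0n leq_addl.
case: p hp => [|p'] hp; first by move: hp; rewrite /subw /=.
set p := p'.+1; rewrite -/(epos tau u p) in hp.
exists (u p'); split.
  have hsz := ne (u p').
  rewrite /last_letter -(nth_last (u p')) (set_nth_default (u 0)) ?prednK //.
  rewrite block ?prednK // -subn1 addnBA // -epos_succ -/p -hp /j subn1 /=.
  by rewrite -(addn0 n) (hn 0).
have claim : forall q, q <= M -> epos tau u (p + q) = j + epos tau u q.
  elim=> [|q IH] hq; first by rewrite addn0 hp /epos /subw /= addn0.
  have IH' := IH (ltnW hq).
  set x := epos tau u q.+1.
  have hxM : x <= epos tau u M by exact: epos_le.
  have hxN : x + L <= N' by rewrite leq_add2r.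
  have [r hr] : inE tau u (j + x).
    apply: (hL x) (ex_intro _ q.+1 erefl); symmetry; exact: shift.
  rewrite -/(epos tau u r) in hr.
  have h1 : epos tau u (p + q).+1 <= j + x.
    rewrite hr; apply: epos_le => //. apply: (@epos_ltI _ _ u _ _ ne).
    by rewrite -hr IH' ltn_add2l; apply: epos_lt.
  have hjy : j <= epos tau u (p + q).+1.
    apply: leq_trans (epos_le u ne (leqnSn _)); by rewrite IH' leq_addr.
  set y := epos tau u (p + q).+1 in h1 hjy.
  have hty : y = j + (y - j) by rewrite subnKC.
  have htx : y - j <= x by rewrite leq_subLR.
  have [r' hr'] : inE tau u (y - j).
    apply: (hL (j + (y - j))); first by apply: shift; rewrite (leq_trans _ hxN) ?leq_add2r.
    by rewrite -hty; exists (p + q).+1.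
  rewrite -/(epos tau u r') in hr'.
  have h2 : x <= y - j.
    rewrite hr'; apply: epos_le => //; apply: (@epos_ltI _ _ u _ _ ne).
    rewrite -hr' ltn_subRL -IH'; exact: epos_lt.
  by rewrite addnS -/y hty; congr (j + _); apply/eqP; rewrite eqn_leq htx h2.
have hshift : forall q, q < M -> u (p + q) = u q.
  move=> q hq; apply: (tau_inj pi).
  have hs : size (tau (u (p + q))) = size (tau (u q)).
    apply: (@addnI (j + epos tau u q)).
    have e1 : epos tau u (p + q).+1 = j + epos tau u q + size (tau (u (p + q))).
      by rewrite epos_succ claim // ltnW.
    have e2 : epos tau u (p + q.+1) = j + epos tau u q + size (tau (u q)).
      by rewrite claim // epos_succ addnA.
    by rewrite -e1 -e2 addnS.
  apply: (@eq_from_nth _ (u 0)) => // k hk.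
  rewrite !block // -?hs // claim 1?ltnW // -addnA hj //.
  apply: (@leq_trans (epos tau u q.+1)); first by rewrite epos_succ ltn_add2l -hs.
  apply: leq_trans (epos_le u ne hq) (leq_addr _ _).
exists p' => i hi; case: i hi => [|i] hi; first by rewrite addn0.
by rewrite addnS -addSn hshift //; apply: ltnW.
Qed.

From Stdlib Require Import Classical ClassicalEpsilon.

Lemma condX_mono (A : finType) (u : nat -> A) c M N :
  condX u c M -> N <= M -> condX u c N.
Proof. move=> [n hn] hNM; exists n => i hi; apply: hn; exact: leq_trans hi hNM. Qed.

Lemma step (A : finType) (tau : A -> seq A) (u : nat -> A) a :
  nonerasing tau -> fixed_point tau u -> unil_recognizable tau u ->
  powers_injective tau -> inX u (cons_seq a u) ->
  exists c, last_letter tau c = a /\ inX u (cons_seq c u).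
Proof.
move=> ne fx ur pi hX.
apply: NNPP => hno.
have hc : forall c, last_letter tau c = a -> exists M, ~ condX u c M.
  move=> c hc; apply: not_all_ex_not => hall; apply: hno; exists c; split => //.
have hb : forall s : seq A, exists B, forall c, c \in s -> last_letter tau c = a ->
    ~ condX u c B.
  elim=> [|c s [B hB]]; first by exists 0.
  case: (classic (last_letter tau c = a)) => hca.
    have [Mc hMc] := hc c hca.
    exists (maxn B Mc) => c' hin hla hcond; move: hin; rewrite in_cons => /orP [/eqP Ec|hc'].
      by subst c'; apply: hMc; apply: condX_mono hcond _; rewrite leq_maxr.
    by apply: (hB c' hc' hla); apply: condX_mono hcond _; rewrite leq_maxl.
  exists B => c' hin hla; move: hin; rewrite in_cons => /orP [/eqP Ec|hc'].
    by subst c'.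
  exact: hB.
have [B hB] := hb (enum A).
have [c [hca hcB]] := step_M ne fx ur pi hX B.
by apply: (hB c) => //; rewrite mem_enum.
Qed.

Lemma periodic (A : finType) (f : A -> A) (P : A -> Prop) a :
  (forall x, P x -> exists c, f c = x /\ P c) -> P a ->
  exists d, 0 < d /\ iter d f a = a.
Proof.
move=> hst Pa.
have H : forall x, exists c, P x -> f c = x /\ P c.
  move=> x; case: (classic (P x)) => hx.
    by have [c hc] := hst x hx; exists c.
  by exists x.
pose g x := proj1_sig (constructive_indefinite_description _ (H x)).
have hg : forall x, P x -> f (g x) = x /\ P (g x).
  move=> x; exact: (proj2_sig (constructive_indefinite_description _ (H x))).
have hP : forall k, P (iter k g a) by elim=> //= k IH; case: (hg _ IH).
have hfg : forall k, f (iter k.+1 g a) = iter k g a by move=> k /=; case: (hg _ (hP k)).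
have hback : forall d i, iter d f (iter (d + i) g a) = iter i g a.
  elim=> [|d IH] i; first by rewrite add0n.
  by rewrite iterSr addSn hfg IH.
set s := mkseq (fun k => iter k g a) (#|A|.+1).
have nu : ~~ uniq s.
  apply/negP => /card_uniqP hu.
  by have := max_card (mem s); rewrite hu size_mkseq ltnn.
have [i [j [hij hj heq]]] := uniqPn a nu.
move: heq; rewrite size_mkseq in hj; rewrite !nth_mkseq //; last exact: ltn_trans hij hj.
move=> heq.
set d := j - i.
have hji : j = d + i by rewrite subnK // ltnW.
have hc : iter d f (iter i g a) = iter i g a by rewrite {1}heq hji hback.
have ha : iter i f (iter i g a) = a by have := hback i 0; rewrite addn0.
exists d; split; first by rewrite subn_gt0.
by rewrite -{1}ha -iterD addnC iterD hc ha.
Qed.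

Theorem proposition4 (A : finType) (tau : A -> seq A) (u : nat -> A) :
  nonerasing tau ->
  primitive tau ->
  X_infinite u ->
  unil_recognizable tau u ->
  powers_injective tau ->
  generating tau u ->
  forall a : A,
    inX u (cons_seq a u) <->
    exists s : seq A,
      [/\ suffix_cycle tau s, a \in s & exists2 b, b \in s & inL tau [:: b; u 0]].
Proof.
move=> ne pr Xi ur pi [fx gen] a; split.
  move=> hX.
  have [d [d0 hd]] := @periodic _ (last_letter tau) (fun c => inX u (cons_seq c u)) a
    (fun x hx => step ne fx ur pi hx) hX.
  case: d d0 hd => [|d] // _ hd.
  exists (traject (last_letter tau) a d.+1); split.
  - split => //=.
    have : fpath (last_letter tau) a (traject (last_letter tau) (last_letter tau a) d.+1).
      exact: fpath_traject.
    by rewrite trajectSr -iterSr hd.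
  - by rewrite /= mem_head.
  exists a; first by rewrite /= mem_head.
  apply/(gen _).1.
  have [n hn] := hX 2; exists n.
  rewrite /factor /mkseq /= (hn 0) // (hn 1) //.
move=> [s [hs ha [b hb hL]]].
apply: (backward ne (tau_u0_big ne pr Xi fx) fx hs ha hb).
exact: (gen _).2.
Qed.
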